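(* If $Q$ and $Q'$ are proper quadrilaterals in $K^2$ sharing the same vertices, then the bisectors of $Q$ and $Q'$ are the same. Also, $\Phi_Q=\lambda\Phi_{Q'}$ for some $\lambda\in K$, and two lines are $Q$-orthogonal if and only if they are $Q'$-orthogonal.
   Context: $K$ is a field of characteristic $\neq 2$. Every line $L$ in $K^2$ has an equation $tX-uY+v=0$ normalized so that $t=1$ if $u=0$ and $u=1$ if $u\neq 0$; coefficients denoted $t_L,u_L,v_L$. A quadrilateral $Q=ABA'B'$ consists of four distinct lines $A,B,A',B'$ (sides), not all through one point, with adjacent sides ($A,B$; $B,A'$; $A',B'$; $B',A$) not parallel; opposite sides may be parallel. Vertices: $A\cap B$, $B\cap A'$, $A'\cap B'$, $B'\cap A$. $Q$ is proper if no three sides pass through a common point (so the four vertices are distinct). Let $\alpha=t_Au_Bu_{A'}u_{B'}-u_At_Bu_{A'}u_{B'}+u_Au_Bt_{A'}u_{B'}-u_Au_Bu_{A'}t_{B'}$, $\beta=t_Au_Bt_{A'}u_{B'}-u_At_Bu_{A'}t_{B'}$, $\gamma=t_At_Bt_{A'}u_{B'}-t_At_Bu_{A'}t_{B'}+t_Au_Bt_{A'}t_{B'}-u_At_Bt_{A'}t_{B'}$, $\Phi_Q(X,Y)=\gamma X^2-2\beta XY+\alpha Y^2$, and $\langle \mathbf v,\mathbf w\rangle_Q=\mathbf v^T\begin{pmatrix}\gamma&-\beta\\-\beta&\alpha\end{pmatrix}\mathbf w$. Lines $\ell_1,\ell_2$ are $Q$-orthogonal if $\langle (u_{\ell_1},t_{\ell_1}),(u_{\ell_2},t_{\ell_2})\rangle_Q=0$.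 A line $\ell$ crosses a pair $\{\ell_1,\ell_2\}$ if it is distinct from both and not parallel to both; $\mathrm{mid}_{\{\ell_1,\ell_2\}}(\ell)$ is the midpoint of the points where $\ell$ meets $\ell_1,\ell_2$ (the point at infinity of $\ell$ if one of them is at infinity). $\ell$ bisects $Q$ (is a bisector) if $\mathrm{mid}_{\mathsf P}(\ell)$ is the same for all pairs $\mathsf P$ among $\{A,A'\},\{B,B'\}$ that $\ell$ crosses; this common point is the midpoint of the bisector. *)

(* Defs.v *)
From HB Require Import structures.
From mathcomp Require Import all_boot all_order all_algebra.
Set Implicit Arguments. Unset Strict Implicit. Unset Printing Implicit Defensive.
Import Order.TTheory GRing.Theory Num.Theory.
Local Open Scope ring_scope.

Section Geometry.
Variable K : fieldType.

(* A line  t X - u Y + v = 0  is represented by its coefficient triple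
   ((t, u), v), subject to the normalization of the paper. *)
Definition line := (K * K * K)%type.
Definition tL (l : line) : K := l.1.1.
Definition uL (l : line) : K := l.1.2.
Definition vL (l : line) : K := l.2.

Definition is_line (l : line) : bool :=
  if uL l == 0 then tL l == 1 else uL l == 1.

Definition point := (K * K)%type.

Definition on_line (p : point) (l : line) : Prop :=
  tL l * p.1 - uL l * p.2 + vL l = 0.

(* parallel lines: proportional (hence, after normalization, equal) (t,u) *)
Definition parallel (l m : line) : Prop := uL l * tL m = tL l * uL m.

(* points of the projective closure: affine points, or the point at
   infinity in the direction of the lines with normalized (t,u) *)
Inductive ppoint := Fin of point | Inf of K & K.

(* the point where l meets m (Cramer's rule when not parallel) *)
Definition meet (l m : line) : ppoint :=
  let D := uL l * tL m - tL l * uL m in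
  if D == 0 then Inf (tL l) (uL l)
  else Fin ((vL l * uL m - uL l * vL m) / D, (vL l * tL m - tL l * vL m) / D).

Definition crosses (l l1 l2 : line) : Prop :=
  l <> l1 /\ l <> l2 /\ ~ (parallel l l1 /\ parallel l l2).

Definition mid (l1 l2 l : line) : ppoint :=
  match meet l l1, meet l l2 with
  | Fin p, Fin q => Fin ((p.1 + q.1) / 2%:R, (p.2 + q.2) / 2%:R)
  | _, _ => Inf (tL l) (uL l)
  end.

Record quad := Quad { qA : line; qB : line; qA' : line; qB' : line }.

Definition is_quad (Q : quad) : Prop :=
  let: Quad A B A' B' := Q in
  [/\ is_line A, is_line B, is_line A' & is_line B'] /\
  [/\ A <> B, A <> A', A <> B' & B <> A'] /\ [/\ B <> B' & A' <> B'] /\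
  ~ (exists p, [/\ on_line p A, on_line p B, on_line p A' & on_line p B']) /\
  [/\ ~ parallel A B, ~ parallel B A', ~ parallel A' B' & ~ parallel B' A].

Definition is_proper_quad (Q : quad) : Prop :=
  let: Quad A B A' B' := Q in
  is_quad Q /\
  ~ (exists p, [/\ on_line p A, on_line p B & on_line p A']) /\
  ~ (exists p, [/\ on_line p A, on_line p B & on_line p B']) /\
  ~ (exists p, [/\ on_line p A, on_line p A' & on_line p B']) /\
  ~ (exists p, [/\ on_line p B, on_line p A' & on_line p B']).

Definition is_vertex (Q : quad) (p : point) : Prop :=
  let: Quad A B A' B' := Q in
  (on_line p A /\ on_line p B) \/ (on_line p B /\ on_line p A') \/
  (on_line p A' /\ on_line p B') \/ (on_line p B' /\ on_line p A).

Definition alphaQ (Q : quad) : K :=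
  let: Quad A B A' B' := Q in
  tL A * uL B * uL A' * uL B' - uL A * tL B * uL A' * uL B'
  + uL A * uL B * tL A' * uL B' - uL A * uL B * uL A' * tL B'.

Definition betaQ (Q : quad) : K :=
  let: Quad A B A' B' := Q in
  tL A * uL B * tL A' * uL B' - uL A * tL B * uL A' * tL B'.

Definition gammaQ (Q : quad) : K :=
  let: Quad A B A' B' := Q in
  tL A * tL B * tL A' * uL B' - tL A * tL B * uL A' * tL B'
  + tL A * uL B * tL A' * tL B' - uL A * tL B * tL A' * tL B'.

Definition PhiQ (Q : quad) (X Y : K) : K :=
  gammaQ Q * X ^+ 2 - 2%:R * betaQ Q * X * Y + alphaQ Q * Y ^+ 2.

Definition innerQ (Q : quad) (v w : K * K) : K :=
  gammaQ Q * v.1 * w.1 - betaQ Q * v.1 * w.2 - betaQ Q * v.2 * w.1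
  + alphaQ Q * v.2 * w.2.

Definition Q_orthogonal (Q : quad) (l1 l2 : line) : Prop :=
  innerQ Q (uL l1, tL l1) (uL l2, tL l2) = 0.

Definition bisects (Q : quad) (l : line) : Prop :=
  crosses l (qA Q) (qA' Q) -> crosses l (qB Q) (qB' Q) ->
  mid (qA Q) (qA' Q) l = mid (qB Q) (qB' Q) l.

End Geometry.

(* Main.v *)
From HB Require Import structures.
From mathcomp Require Import all_boot all_order all_algebra ring.
Require Import Defs.
Import GRing.Theory.
Local Open Scope ring_scope.
Set Implicit Arguments. Unset Strict Implicit.

Section Aux.
Variable K : fieldType.
Implicit Types l L M N O : line K.

Definition p0 (l : line K) : K * K := ((uL l - 1) * vL l, uL l * vL l).
Definition aL (l L : line K) := tL L * (p0 l).1 - uL L * (p0 l).2 + vL L.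
Definition bL (l L : line K) := uL l * tL L - tL l * uL L.
Definition wv l L M : K * K :=
  (bL l L * bL l M, aL l L * bL l M + aL l M * bL l L).
Definition wnz l L M := ((wv l L M).1 != 0) || ((wv l L M).2 != 0).
Definition det2 (x y : K * K) := x.1 * y.2 - x.2 * y.1.
Definition sig l L M := - (wv l L M).2 / (2%:R * (wv l L M).1).

Lemma is_lineP l : is_line l -> (uL l = 0 /\ tL l = 1) \/ uL l = 1.
Proof. rewrite /is_line; case: eqP => [-> /eqP|_ /eqP]; auto. Qed.

Lemma meet_fin l L : is_line l -> bL l L != 0 ->
  meet l L = Fin ((p0 l).1 + (- aL l L / bL l L) * uL l,
                  (p0 l).2 + (- aL l L / bL l L) * tL l).
Proof.
move=> /is_lineP hl hb; rewrite /meet /=.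
case: eqP => [h|_]; first by rewrite /bL h eqxx in hb.
move: hl hb; rewrite /aL /bL /p0.
case: l => [[t u] v]; case: L => [[T U] V]; rewrite /tL /uL /vL /=.
case=> [[-> ->]|->] hb; rewrite ?mul0r ?mul1r ?sub0r in hb *;
  congr (Fin (_, _)); field; exact: hb.
Qed.

Lemma meet_inf l L : bL l L = 0 -> meet l L = Inf (tL l) (uL l).
Proof. by move=> hb; rewrite /meet /= -/(bL l L) hb eqxx. Qed.

Lemma par_b l L : parallel l L <-> bL l L = 0.
Proof.
rewrite /parallel /bL; split => [->|/eqP]; first by rewrite subrr.
by rewrite subr_eq0 => /eqP.
Qed.

Lemma bL_par l L : is_line l -> is_line L -> bL l L = 0 ->
  tL L = tL l /\ uL L = uL l.
Proof.
move=> /is_lineP [[hu ht]|hu] /is_lineP [[hU hT]|hU]; rewrite /bL hu ?ht hU ?hT;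
  move/eqP; rewrite ?mul0r ?mul1r ?mulr1 ?mulr0 ?sub0r ?subr0 ?oppr_eq0 ?oner_eq0
  ?subr_eq0 // => /eqP -> //.
Qed.

Lemma aL_self l : is_line l -> aL l l = 0.
Proof. by move=> /is_lineP [[hu ht]|hu]; rewrite /aL /p0 hu ?ht /=; ring. Qed.

Lemma bL_self l : bL l l = 0.
Proof. by rewrite /bL; ring. Qed.

Lemma aL_par l L : is_line l -> is_line L -> bL l L = 0 -> L <> l -> aL l L != 0.
Proof.
move=> hl hL hb hne; have [ht hu] := bL_par hl hL hb.
have e : aL l L = aL l l + (vL L - vL l) by rewrite /aL ht hu; ring.
rewrite e aL_self // add0r subr_eq0; apply/eqP => hv; apply: hne.
move: ht hu hv; clear hl hL hb e; case: L => [[T U] V]; case: l => [[t u] v].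
by rewrite /tL /uL /vL /= => -> -> ->.
Qed.

Lemma cross_w l L M : is_line l -> is_line L -> is_line M ->
  crosses l L M <-> wnz l L M.
Proof.
move=> hl hL hM; rewrite /wnz /wv /=; split.
  move=> [nL [nM np]].
  have nL' : L <> l by move=> e; apply: nL.
  have nM' : M <> l by move=> e; apply: nM.
  case: (eqVneq (bL l L) 0) => bL0.
    have bM0 : bL l M != 0.
      by apply/eqP => bM0; apply: np; split; apply/par_b.
    apply/orP; right; rewrite bL0 mulr0 addr0 mulf_neq0 //.
    exact: aL_par.
  case: (eqVneq (bL l M) 0) => bM0.
    apply/orP; right; rewrite bM0 mulr0 add0r mulf_neq0 //.
    exact: aL_par.
  by apply/orP; left; rewrite mulf_neq0.
move=> h; split; [|split].
- move=> e; rewrite -e aL_self // bL_self in h.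
  by rewrite !(mul0r, mulr0, addr0, add0r, eqxx) in h.
- move=> e; rewrite -e aL_self // bL_self in h.
  by rewrite !(mul0r, mulr0, addr0, add0r, eqxx) in h.
- move=> [/par_b b1 /par_b b2].
  by rewrite b1 b2 !mulr0 addr0 eqxx in h.
Qed.

Lemma mid_fin l L M : (2%:R : K) != 0 -> is_line l -> bL l L != 0 -> bL l M != 0 ->
  mid L M l = Fin ((p0 l).1 + sig l L M * uL l, (p0 l).2 + sig l L M * tL l).
Proof.
move=> h2 hl hL hM; rewrite /mid (meet_fin hl hL) (meet_fin hl hM) /sig /wv /=.
congr (Fin (_, _)); field; rewrite ?h2 ?hL ?hM //.
Qed.

Lemma mid_inf l L M : is_line l -> (bL l L = 0 \/ bL l M = 0) ->
  mid L M l = Inf (tL l) (uL l).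
Proof.
move=> hl h; case: (eqVneq (bL l L) 0) => hL.
  by rewrite /mid (meet_inf hL).
have hM : bL l M = 0 by case: h => // e; rewrite e eqxx in hL.
by rewrite /mid (meet_fin hl hL) (meet_inf hM).
Qed.

Lemma fin_inj l s1 s2 : is_line l ->
  Fin ((p0 l).1 + s1 * uL l, (p0 l).2 + s1 * tL l) =
  Fin ((p0 l).1 + s2 * uL l, (p0 l).2 + s2 * tL l) -> s1 = s2.
Proof.
move=> /is_lineP [[hu ht]|hu] [e1 e2].
  by rewrite ht !mulr1 in e2; exact: addrI e2.
by rewrite hu !mulr1 in e1; exact: addrI e1.
Qed.


Lemma prod0 (x y : K) : x * y = 0 -> x = 0 \/ y = 0.
Proof. by move/eqP; rewrite mulf_eq0 => /orP [/eqP|/eqP]; auto. Qed.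

Lemma wnz0 l L M : ~~ wnz l L M -> (wv l L M).1 = 0 /\ (wv l L M).2 = 0.
Proof. by rewrite /wnz negb_or !negbK => /andP [/eqP -> /eqP ->]. Qed.

Lemma mid_eq l L M N O : (2%:R : K) != 0 -> is_line l -> is_line L ->
  is_line M -> is_line N -> is_line O -> crosses l L M -> crosses l N O ->
  (mid L M l = mid N O l <-> det2 (wv l L M) (wv l N O) = 0).
Proof.
move=> h2 hl hL hM hN hO /(cross_w hl hL hM) c1 /(cross_w hl hN hO) c2.
rewrite /det2.
case: (eqVneq (wv l L M).1 0) => e1; case: (eqVneq (wv l N O).1 0) => e2.
- have -> : mid L M l = Inf (tL l) (uL l).
    by apply: mid_inf => //; exact: prod0 e1.
  have -> : mid N O l = Inf (tL l) (uL l).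
    by apply: mid_inf => //; exact: prod0 e2.
  by rewrite e1 e2 mul0r mulr0 subrr.
- have -> : mid L M l = Inf (tL l) (uL l).
    by apply: mid_inf => //; exact: prod0 e1.
  have /andP [b1 b2] : (bL l N != 0) && (bL l O != 0).
    by rewrite -negb_or -mulf_eq0; exact: e2.
  rewrite (mid_fin h2 hl b1 b2); split => // /eqP.
  have c1' : (wv l L M).2 != 0 by move: c1; rewrite /wnz e1 eqxx.
  by rewrite e1 mul0r sub0r oppr_eq0 mulf_eq0 (negbTE c1') (negbTE e2).
- have -> : mid N O l = Inf (tL l) (uL l).
    by apply: mid_inf => //; exact: prod0 e2.
  have /andP [b1 b2] : (bL l L != 0) && (bL l M != 0).
    by rewrite -negb_or -mulf_eq0; exact: e1.
  rewrite (mid_fin h2 hl b1 b2); split => // /eqP.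
  have c2' : (wv l N O).2 != 0 by move: c2; rewrite /wnz e2 eqxx.
  by rewrite e2 mulr0 subr0 mulf_eq0 (negbTE c2') (negbTE e1).
- have /andP [b1 b2] : (bL l L != 0) && (bL l M != 0).
    by rewrite -negb_or -mulf_eq0; exact: e1.
  have /andP [b3 b4] : (bL l N != 0) && (bL l O != 0).
    by rewrite -negb_or -mulf_eq0; exact: e2.
  rewrite (mid_fin h2 hl b1 b2) (mid_fin h2 hl b3 b4).
  have E : (wv l L M).1 * (wv l N O).2 - (wv l L M).2 * (wv l N O).1 =
     2%:R * (wv l L M).1 * (wv l N O).1 * (sig l L M - sig l N O).
    by rewrite /sig; field; rewrite h2 e1 e2.
  rewrite E; split.
    by move/fin_inj => /(_ hl) ->; rewrite subrr mulr0.
  have nz : 2%:R * (wv l L M).1 * (wv l N O).1 != 0 by rewrite !mulf_neq0.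
  by move/eqP; rewrite mulf_eq0 (negbTE nz) /= subr_eq0 => /eqP ->.
Qed.

Lemma bisect_det (Q : quad K) l : (2%:R : K) != 0 -> is_line l ->
  is_line (qA Q) -> is_line (qB Q) -> is_line (qA' Q) -> is_line (qB' Q) ->
  (bisects Q l <-> det2 (wv l (qA Q) (qA' Q)) (wv l (qB Q) (qB' Q)) = 0).
Proof.
move=> h2 hl hA hB hA' hB'; rewrite /bisects.
case: (boolP (wnz l (qA Q) (qA' Q))) => c1; last first.
  rewrite /det2; have [-> ->] := wnz0 c1; rewrite !mul0r subrr; split => // _ /cross_w.
  by move=> /(_ hl hA hA'); rewrite (negbTE c1).
case: (boolP (wnz l (qB Q) (qB' Q))) => c2; last first.
  rewrite /det2; have [-> ->] := wnz0 c2; rewrite !mulr0 subrr; split => // _ _ /cross_w.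
  by move=> /(_ hl hB hB'); rewrite (negbTE c2).
have k1 := proj2 (cross_w hl hA hA') c1.
have k2 := proj2 (cross_w hl hB hB') c2.
rewrite -(mid_eq h2 hl hA hA' hB hB' k1 k2); split; first by apply.
by move=> h _ _.
Qed.


Definition Lp (p q : point K) : line K :=
  (q.2 - p.2, q.1 - p.1, (q.1 - p.1) * p.2 - (q.2 - p.2) * p.1).

Definition scaled (c : K) L L0 :=
  [/\ tL L = c * tL L0, uL L = c * uL L0 & vL L = c * vL L0].

Lemma inter_exists L M : ~ parallel L M ->
  exists p, on_line p L /\ on_line p M.
Proof.
move=> np; have D0 : uL L * tL M - tL L * uL M != 0.
  by apply/eqP => e; apply: np; apply/par_b.
exists ((vL L * uL M - uL L * vL M) / (uL L * tL M - tL L * uL M),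
        (vL L * tL M - tL L * vL M) / (uL L * tL M - tL L * uL M)).
by rewrite /on_line /=; split; field.
Qed.

Lemma inter_unique L M p q : ~ parallel L M -> on_line p L -> on_line p M ->
  on_line q L -> on_line q M -> p = q.
Proof.
move=> np; have D0 : uL L * tL M - tL L * uL M != 0.
  by apply/eqP => e; apply: np; apply/par_b.
rewrite /on_line => hpL hpM hqL hqM.
have ex : (uL L * tL M - tL L * uL M) * (p.1 - q.1) =
  - uL M * (tL L * p.1 - uL L * p.2 + vL L) + uL M * (tL L * q.1 - uL L * q.2 + vL L)
  + uL L * (tL M * p.1 - uL M * p.2 + vL M) - uL L * (tL M * q.1 - uL M * q.2 + vL M).
  by ring.
have ey : (uL L * tL M - tL L * uL M) * (p.2 - q.2) =
  - tL M * (tL L * p.1 - uL L * p.2 + vL L) + tL M * (tL L * q.1 - uL L * q.2 + vL L)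
  + tL L * (tL M * p.1 - uL M * p.2 + vL M) - tL L * (tL M * q.1 - uL M * q.2 + vL M).
  by ring.
rewrite hpL hpM hqL hqM !mulr0 ?oppr0 ?addr0 ?subrr in ex ey.
move/eqP: ex; rewrite mulf_eq0 (negbTE D0) /= subr_eq0 => /eqP ex.
move/eqP: ey; rewrite mulf_eq0 (negbTE D0) /= subr_eq0 => /eqP ey.
by move: ex ey; case: p {hpL hpM}; case: q {hqL hqM} => /= ? ? ? ? -> ->.
Qed.

Lemma line_through L p q : is_line L -> on_line p L -> on_line q L -> p <> q ->
  exists2 c, c != 0 & scaled c L (Lp p q).
Proof.
case: L => [[t u] v]; case: p => p1 p2; case: q => q1 q2.
rewrite /scaled /on_line /Lp /tL /uL /vL /= => /is_lineP; rewrite /tL /uL /=.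
case=> [[-> ->]|->] hp hq hne.
  rewrite !mul1r !mul0r !subr0 in hp hq.
  have ev : v = - p1 by rewrite -[v](addKr p1) hp addr0.
  have e1 : q1 = p1 by apply: (@addIr _ v); rewrite hp hq.
  have e2 : q2 - p2 != 0.
    by rewrite subr_eq0; apply/eqP => e; apply: hne; rewrite e1 e.
  exists (q2 - p2)^-1; first by rewrite invr_eq0.
  rewrite e1 ev subrr; split; field; exact: e2.
rewrite !mul1r in hp hq.
have ev : v = p2 - t * p1.
  by rewrite -[v](addKr (t * p1 - p2)) hp addr0 opprB.
have eq2 : q2 = t * q1 + v.
  by rewrite -[LHS]addr0 -hq; ring.
have e1 : q1 - p1 != 0.
  rewrite subr_eq0; apply/eqP => e; apply: hne.
  by rewrite eq2 ev e; congr (_, _); ring.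
exists (q1 - p1)^-1; first by rewrite invr_eq0.
rewrite eq2 ev; split; field; exact: e1.
Qed.


Lemma ab_scale l c L L0 : scaled c L L0 ->
  aL l L = c * aL l L0 /\ bL l L = c * bL l L0.
Proof. by case=> ht hu hv; rewrite /aL /bL ht hu hv; split; ring. Qed.

Definition Gf (P1 P2 P3 P4 : point K) l :=
  det2 (wv l (Lp P1 P4) (Lp P2 P3)) (wv l (Lp P1 P2) (Lp P3 P4)).
Definition Q0 (P1 P2 P3 P4 : point K) :=
  Quad (Lp P1 P4) (Lp P1 P2) (Lp P2 P3) (Lp P3 P4).

Lemma det_scaleG l cA cB cA' cB' A B A' B' (P1 P2 P3 P4 : point K) :
  scaled cA A (Lp P1 P4) -> scaled cB B (Lp P1 P2) ->
  scaled cA' A' (Lp P2 P3) -> scaled cB' B' (Lp P3 P4) ->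
  det2 (wv l A A') (wv l B B') = cA * cA' * cB * cB' * Gf P1 P2 P3 P4 l.
Proof.
move=> /(ab_scale l) [a1 b1] /(ab_scale l) [a2 b2] /(ab_scale l) [a3 b3]
  /(ab_scale l) [a4 b4].
rewrite /Gf /det2 /wv a1 b1 a2 b2 a3 b3 a4 b4 /=; ring.
Qed.

Lemma phi_scaleQ cA cB cA' cB' A B A' B' (P1 P2 P3 P4 : point K) :
  scaled cA A (Lp P1 P4) -> scaled cB B (Lp P1 P2) ->
  scaled cA' A' (Lp P2 P3) -> scaled cB' B' (Lp P3 P4) ->
  [/\ gammaQ (Quad A B A' B') = cA * cA' * cB * cB' * gammaQ (Q0 P1 P2 P3 P4),
      betaQ (Quad A B A' B') = cA * cA' * cB * cB' * betaQ (Q0 P1 P2 P3 P4) &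
      alphaQ (Quad A B A' B') = cA * cA' * cB * cB' * alphaQ (Q0 P1 P2 P3 P4)].
Proof.
case=> t1 u1 _ [t2 u2 _] [t3 u3 _] [t4 u4 _].
rewrite /Q0 /gammaQ /betaQ /alphaQ t1 u1 t2 u2 t3 u3 t4 u4; split; ring.
Qed.

Lemma quad_vert (Q : quad K) : is_proper_quad Q ->
  exists P1 P2 P3 P4 : point K, exists cA cB cA' cB' : K,
  [/\ [/\ P1 <> P2, P1 <> P3, P1 <> P4, P2 <> P3 & P2 <> P4 /\ P3 <> P4],
      (forall p, is_vertex Q p <-> [\/ p = P1, p = P2, p = P3 | p = P4]),
      [/\ cA != 0, cB != 0, cA' != 0 & cB' != 0] &
      [/\ scaled cA (qA Q) (Lp P1 P4), scaled cB (qB Q) (Lp P1 P2),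
          scaled cA' (qA' Q) (Lp P2 P3) & scaled cB' (qB' Q) (Lp P3 P4)]].
Proof.
case: Q => A B A' B' /=.
move=> [[[lA lB lA' lB'] [_ [_ [_ [pAB pBA' pA'B' pB'A]]]]] [n1 [n2 [n3 n4]]]].
have [P1 [h1A h1B]] := inter_exists pAB.
have [P2 [h2B h2A']] := inter_exists pBA'.
have [P3 [h3A' h3B']] := inter_exists pA'B'.
have [P4 [h4B' h4A]] := inter_exists pB'A.
have d12 : P1 <> P2 by move=> e; apply: n1; exists P1; split => //; rewrite e.
have d13 : P1 <> P3 by move=> e; apply: n1; exists P1; split => //; rewrite e.
have d14 : P1 <> P4 by move=> e; apply: n2; exists P1; split => //; rewrite e.
have d23 : P2 <> P3 by move=> e; apply: n4; exists P2; split => //; rewrite e.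
have d24 : P2 <> P4 by move=> e; apply: n3; exists P2; split => //; rewrite e.
have d34 : P3 <> P4 by move=> e; apply: n3; exists P3; split => //; rewrite e.
have [cA nA sA] := line_through lA h1A h4A d14.
have [cB nB sB] := line_through lB h1B h2B d12.
have [cA' nA' sA'] := line_through lA' h2A' h3A' d23.
have [cB' nB' sB'] := line_through lB' h3B' h4B' d34.
exists P1, P2, P3, P4, cA, cB, cA', cB'; split => //.
move=> p; split.
  case=> [[hA hB]|[[hB hA']|[[hA' hB']|[hB' hA]]]].
  - by constructor 1; exact: inter_unique pAB hA hB h1A h1B.
  - by constructor 2; exact: inter_unique pBA' hB hA' h2B h2A'.
  - by constructor 3; exact: inter_unique pA'B' hA' hB' h3A' h3B'.
  - by constructor 4; exact: inter_unique pB'A hB' hA h4B' h4A.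
by case=> ->; [left|right; left|right; right; left|right; right; right].
Qed.

End Aux.
Ltac leaf s := exists s; [by rewrite ?oppr_eq0 oner_eq0 | split; [move=> l; rewrite /Gf /det2 /wv /aL /bL /p0 /Lp /tL /uL /vL /=; ring | rewrite /Q0 /gammaQ /betaQ /alphaQ /Lp /tL /uL /vL /=; split; ring]].

Lemma perm_G (K : fieldType) (P1 P2 P3 P4 R1 R2 R3 R4 : point K) :
  [\/ R1 = P1, R1 = P2, R1 = P3 | R1 = P4] ->
  [\/ R2 = P1, R2 = P2, R2 = P3 | R2 = P4] ->
  [\/ R3 = P1, R3 = P2, R3 = P3 | R3 = P4] ->
  [\/ R4 = P1, R4 = P2, R4 = P3 | R4 = P4] ->
  R1 <> R2 -> R1 <> R3 -> R1 <> R4 -> R2 <> R3 -> R2 <> R4 -> R3 <> R4 ->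
  exists2 s : K, s != 0 &
    (forall l, Gf R1 R2 R3 R4 l = s * Gf P1 P2 P3 P4 l) /\
    [/\ gammaQ (Q0 R1 R2 R3 R4) = s * gammaQ (Q0 P1 P2 P3 P4),
        betaQ (Q0 R1 R2 R3 R4) = s * betaQ (Q0 P1 P2 P3 P4) &
        alphaQ (Q0 R1 R2 R3 R4) = s * alphaQ (Q0 P1 P2 P3 P4)].
Proof.
case=> ->; case=> ->; case=> ->; case=> -> => d12 d13 d14 d23 d24 d34;
  try (exfalso; first [exact: d12 erefl | exact: d13 erefl | exact: d14 erefl
                      | exact: d23 erefl | exact: d24 erefl | exact: d34 erefl]);
  first [leaf (1 : K) | leaf (-1 : K)].
Qed.
Lemma key (K : fieldType) (a x : K) : a != 0 -> (a * x = 0 <-> x = 0).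
Proof.
move=> a0; split => [/eqP|->]; last by rewrite mulr0.
by rewrite mulf_eq0 (negbTE a0) => /eqP.
Qed.

Lemma bisect_det' (K : fieldType) (A B A' B' l : line K) : (2%:R : K) != 0 -> is_line l ->
  is_line A -> is_line B -> is_line A' -> is_line B' ->
  (bisects (Quad A B A' B') l <-> det2 (wv l A A') (wv l B B') = 0).
Proof. by move=> h2 hl hA hB hA' hB'; exact: (@bisect_det K (Quad A B A' B') l h2 hl hA hB hA' hB'). Qed.

Unset Implicit Arguments.
Theorem proposition3p4 (K : fieldType) (Q Q' : quad K) :
  (2%:R : K) != 0 ->
  is_proper_quad Q -> is_proper_quad Q' ->
  (forall p : point K, is_vertex Q p <-> is_vertex Q' p) ->
  (forall l : line K, is_line l -> (bisects Q l <-> bisects Q' l)) /\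
  (exists lambda : K,
     gammaQ Q = lambda * gammaQ Q' /\ betaQ Q = lambda * betaQ Q' /\
     alphaQ Q = lambda * alphaQ Q') /\
  (forall l1 l2 : line K, is_line l1 -> is_line l2 ->
     (Q_orthogonal Q l1 l2 <-> Q_orthogonal Q' l1 l2)).
Proof.
move=> h2 hQ hQ' hV.
have [P1 [P2 [P3 [P4 [cA [cB [cA' [cB' [[_ _ _ _ _] vP [nA nB nA' nB'] [sA sB sA' sB']]]]]]]]]] := quad_vert hQ.
have [R1 [R2 [R3 [R4 [cX [cY [cX' [cY' [[e12 e13 e14 e23 [e24 e34]] vR [nX nY nX' nY'] [sX sY sX' sY']]]]]]]]]] := quad_vert hQ'.
have mem : forall R, is_vertex Q' R -> [\/ R = P1, R = P2, R = P3 | R = P4].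
  by move=> R /hV /vP.
have m1 : is_vertex Q' R1 by apply/vR; constructor 1.
have m2 : is_vertex Q' R2 by apply/vR; constructor 2.
have m3 : is_vertex Q' R3 by apply/vR; constructor 3.
have m4 : is_vertex Q' R4 by apply/vR; constructor 4.
have [s s0 [hG [hg hb ha]]] :=
  perm_G (mem _ m1) (mem _ m2) (mem _ m3) (mem _ m4) e12 e13 e14 e23 e24 e34.
move: sA sB sA' sB' sX sY sX' sY'.
case: Q hQ {hV vP m1 m2 m3 m4 mem} => A B A' B' hQ.
case: Q' hQ' {vR} => X Y X' Y' hQ' /= sA sB sA' sB' sX sY sX' sY'.
have [[[lA lB lA' lB'] _] _] := hQ.
have [[[lX lY lX' lY'] _] _] := hQ'.
have cP : cA * cA' * cB * cB' != 0 by rewrite !mulf_neq0.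
have cR : cX * cX' * cY * cY' != 0 by rewrite !mulf_neq0.
have [gP bP aP] := phi_scaleQ sA sB sA' sB'.
have [gR bR aR] := phi_scaleQ sX sY sX' sY'.
set lam := (cA * cA' * cB * cB') / (cX * cX' * cY * cY' * s).
have lam0 : lam != 0 by rewrite /lam mulf_neq0 // invr_eq0 mulf_neq0.
have eg : gammaQ (Quad A B A' B') = lam * gammaQ (Quad X Y X' Y').
  by rewrite gP gR hg /lam; field; rewrite s0 nX nY nX' nY'.
have eb : betaQ (Quad A B A' B') = lam * betaQ (Quad X Y X' Y').
  by rewrite bP bR hb /lam; field; rewrite s0 nX nY nX' nY'.
have ea : alphaQ (Quad A B A' B') = lam * alphaQ (Quad X Y X' Y').
  by rewrite aP aR ha /lam; field; rewrite s0 nX nY nX' nY'.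
split; [|split].
- move=> l hl.
  rewrite (bisect_det' h2 hl lA lB lA' lB') (bisect_det' h2 hl lX lY lX' lY').
  rewrite (det_scaleG l sA sB sA' sB') (det_scaleG l sX sY sX' sY') hG mulrA.
  rewrite (key _ cP) (key _ (mulf_neq0 cR s0)).
  by [].
- by exists lam.
- move=> l1 l2 _ _; rewrite /Q_orthogonal /innerQ eg eb ea.
  set a := gammaQ _; set b := betaQ _; set c := alphaQ _.
  rewrite /= -[X in _ <-> X](key _ lam0); split => h; rewrite -h; ring.
Qed.
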